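(* Consider control protocol (C4) with $r_1=\cdots=r_n\ge\frac1{n-1}$. Then for any constants $z^*\in[0,1]$ and $\alpha^*>0$, the set $S_{z^*,\alpha^*}=\{(x_1,\dots,x_n)\in[0,1]^n:\max_{i\in\mathcal V}|x_i-z^*|<\alpha^*\}$ is finite-time robustly reachable from $[0,1]^n$.
   Context: Fix $n\ge3$, $\mathcal V=\{1,\dots,n\}$, confidence thresholds $r_i\in(0,1]$, $\eta>0$. States $x(t)\in[0,1]^n$. Neighbor set $\mathcal N_i(t)=\{j:|x_j(t)-x_i(t)|\le r_i\}$ (contains $i$), $\Pi_{[0,1]}(y)=\min\{1,\max\{0,y\}\}$. Control protocol (C4): $x_i(t+1)=\Pi_{[0,1]}\big(|\mathcal N_i(t)|^{-1}[x_i(t)+\sum_{j\in\mathcal N_i(t)\setminus\{i\}}(x_j(t)+u_{ji}(t)+b_{ji}(t))]\big)$, where for $j\in\mathcal N_i(t)\setminus\{i\}$: $\delta_i(t)\in(0,\eta)$ is a chosen parameter, $u_{ji}(t)\in[-\eta+\delta_i(t),\eta-\delta_i(t)]$ a chosen control input, $b_{ji}(t)\in[-\delta_i(t),\delta_i(t)]$ an arbitrary uncertainty; the choices may depend on $x(0),\dots,x(t)$. A set $S\subseteq[0,1]^n$ is finite-time robustly reachable from $[0,1]^n$ under the protocol if there exist constants $T>0$ and $\varepsilon\in(0,\eta)$ such that for every $x(0)\in[0,1]^n$, either $x(0)\in S$, or one can choose $\delta_i(t)\in[\varepsilon,\eta)$ and $u_{ji}(t)\in[-\eta+\delta_i(t),\eta-\delta_i(t)]$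 ($0\le t<T$, $i\in\mathcal V$, $j\in\mathcal N_i(t)\setminus\{i\}$) guaranteeing that for arbitrary $b_{ji}(t)\in[-\delta_i(t),\delta_i(t)]$ there is $t\in[1,T]$ with $x(t)\in S$. *)

(* Defs.v *)
From Stdlib Require Import Reals Lra List.
Import ListNotations.
Open Scope R_scope.

(* States are x : nat -> R; agents are 0, ..., n-1 (entries >= n are ignored). *)

Definition nbr (n : nat) (r : nat -> R) (x : nat -> R) (i : nat) : list nat :=
  filter (fun j => if Rle_dec (Rabs (x j - x i)) (r i) then true else false)
         (seq 0 n).

Definition sumR (l : list R) : R := fold_right Rplus 0 l.

Definition proj01 (y : R) : R := Rmin 1 (Rmax 0 y).

(* One step of protocol (C4): u j i = u_{ji}(t), bb j i = b_{ji}(t). *)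
Definition step (n : nat) (r : nat -> R) (x : nat -> R)
    (u : nat -> nat -> R) (bb : nat -> nat -> R) : nat -> R :=
  fun i =>
    let N := nbr n r x i in
    proj01 ((x i + sumR (map (fun j => x j + u j i + bb j i)
                              (filter (fun j => negb (Nat.eqb j i)) N)))
            / INR (length N)).

(* A history x(0), ..., x(t), stored as a list in chronological order. *)
Definition history := list (nat -> R).

Definition cur (x0 : nat -> R) (h : history) : nat -> R := last h x0.

(* ul t h j i = control input u_{ji}(t) chosen from history h = [x(0);...;x(t)];
   b t j i = uncertainty b_{ji}(t). *)
Fixpoint hist (n : nat) (r : nat -> R)
    (ul : nat -> history -> nat -> nat -> R) (b : nat -> nat -> nat -> R)
    (x0 : nat -> R) (t : nat) : history :=
  match t with
  | O => [x0]
  | S t' => let h := hist n r ul b x0 t' in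
            h ++ [step n r (cur x0 h) (ul t' h) (b t')]
  end.

Definition state n r ul b x0 t : nat -> R := cur x0 (hist n r ul b x0 t).

Definition in01 (n : nat) (x : nat -> R) : Prop :=
  forall i, (i < n)%nat -> 0 <= x i <= 1.

(* Finite-time robust reachability of S from [0,1]^n under (C4).
   Controls: delta t h i = delta_i(t), ul t h j i = u_{ji}(t), as feedback on the
   history h = [x(0);...;x(t)]. *)
Definition ftrr (n : nat) (r : nat -> R) (eta : R) (S : (nat -> R) -> Prop) : Prop :=
  exists (T : nat) (eps : R),
    (0 < T)%nat /\ 0 < eps < eta /\
    forall x0 : nat -> R, in01 n x0 ->
      S x0 \/
      exists (delta : nat -> history -> nat -> R)
             (ul : nat -> history -> nat -> nat -> R),
        (forall t h i, (t < T)%nat -> (i < n)%nat ->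
           eps <= delta t h i < eta /\
           forall j, In j (nbr n r (cur x0 h) i) -> j <> i ->
             - eta + delta t h i <= ul t h j i <= eta - delta t h i) /\
        forall b : nat -> nat -> nat -> R,
          (forall t i j, (t < T)%nat -> (i < n)%nat ->
             In j (nbr n r (state n r ul b x0 t) i) -> j <> i ->
             - delta t (hist n r ul b x0 t) i <= b t j i
               <= delta t (hist n r ul b x0 t) i) ->
          exists t : nat, (1 <= t <= T)%nat /\ S (state n r ul b x0 t).

Definition Sset (n : nat) (z alpha : R) (x : nat -> R) : Prop :=
  in01 n x /\ forall i, (i < n)%nat -> Rabs (x i - z) < alpha.

(* Main.v *)
Require Import Defs.
From Stdlib Require Import Reals Lra Lia List ZArith Classical Bool.
Import ListNotations.
Open Scope R_scope.

Lemma sumR_plus (f g : nat -> R) l :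
  sumR (map (fun j => f j + g j) l) = sumR (map f l) + sumR (map g l).
Proof. induction l; simpl; [lra|]. rewrite IHl. lra. Qed.

Lemma sumR_const (c : R) l : sumR (map (fun _ : nat => c) l) = INR (length l) * c.
Proof. induction l; simpl length; [simpl; lra|]. rewrite S_INR. simpl. rewrite IHl. lra. Qed.

Lemma sumR_bound (f : nat -> R) a b l :
  (forall j, In j l -> a <= f j <= b) ->
  INR (length l) * a <= sumR (map f l) <= INR (length l) * b.
Proof.
  induction l; intros H; simpl length; [simpl; lra|]. rewrite S_INR. simpl.
  assert (H1 := H a0 (or_introl eq_refl)).
  assert (H2 : forall j, In j l -> a <= f j <= b) by (intros; apply H; right; auto).
  specialize (IHl H2). lra.
Qed.

Lemma sumR_lt (f : nat -> R) b l :
  l <> [] -> (forall j, In j l -> f j < b) -> sumR (map f l) < INR (length l) * b.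
Proof.
  induction l; intros Hn H; [congruence|]. simpl length. rewrite S_INR. simpl.
  assert (H1 := H a (or_introl eq_refl)).
  destruct l as [|c l'].
  - simpl. lra.
  - assert (IH := IHl ltac:(discriminate) (fun j Hj => H j (or_intror Hj))). lra.
Qed.

Lemma sumR_le (f : nat -> R) b l :
  (forall j, In j l -> f j <= b) -> sumR (map f l) <= INR (length l) * b.
Proof.
  induction l; intros H; simpl length; [simpl; lra|]. rewrite S_INR. simpl.
  assert (H1 := H a (or_introl eq_refl)).
  assert (IH := IHl (fun j Hj => H j (or_intror Hj))). lra.
Qed.
Lemma sumR_ge (f : nat -> R) b l :
  (forall j, In j l -> b <= f j) -> INR (length l) * b <= sumR (map f l).
Proof.
  induction l; intros H; simpl length; [simpl; lra|]. rewrite S_INR. simpl.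
  assert (H1 := H a (or_introl eq_refl)).
  assert (IH := IHl (fun j Hj => H j (or_intror Hj))). lra.
Qed.

Definition noti (i : nat) := fun j => negb (Nat.eqb j i).

Lemma filter_noti_notin i l : ~ In i l -> filter (noti i) l = l.
Proof.
  induction l; simpl; intros H; auto. unfold noti at 1.
  destruct (Nat.eqb_spec a i); [exfalso; auto|]. simpl. rewrite IHl; auto.
Qed.

Lemma split_i (f : nat -> R) i l : NoDup l -> In i l ->
  sumR (map f l) = f i + sumR (map f (filter (noti i) l)) /\
  length l = S (length (filter (noti i) l)).
Proof.
  induction l; intros Hd Hi; [destruct Hi|]. inversion Hd; subst.
  simpl. replace (noti i a) with (negb (Nat.eqb a i)) by reflexivity.
  destruct (Nat.eqb_spec a i).
  - subst. simpl. rewrite filter_noti_notin; auto.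
  - simpl. destruct Hi as [Hi|Hi]; [congruence|].
    destruct (IHl H2 Hi) as [E1 E2]. rewrite E1, E2. split; [lra|auto].
Qed.

Lemma in_noti j i l : In j (filter (noti i) l) <-> In j l /\ j <> i.
Proof.
  rewrite filter_In. unfold noti. destruct (Nat.eqb_spec j i); simpl; intuition.
Qed.

Lemma abs_le y w : Rabs y <= w -> - w <= y <= w.
Proof. unfold Rabs; destruct Rcase_abs; lra. Qed.
Lemma abs_le_i y w : - w <= y <= w -> Rabs y <= w.
Proof. unfold Rabs; destruct Rcase_abs; lra. Qed.
Lemma div_le_l a b c : 0 < b -> a <= c * b -> a / b <= c.
Proof. intros. assert (a / b * b = a) by (field; lra). nra. Qed.
Lemma div_le_r a b c : 0 < b -> c * b <= a -> c <= a / b.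
Proof. intros. assert (a / b * b = a) by (field; lra). nra. Qed.
Lemma div_lt_l a b c : 0 < b -> a < c * b -> a / b < c.
Proof. intros. assert (a / b * b = a) by (field; lra). nra. Qed.

Section S1.
Variable n : nat.
Variable r : R.
Hypothesis Hr : 0 <= r.
Notation rf := (fun _ : nat => r).

Definition NI (x : nat -> R) i := exists j, (j < n)%nat /\ j <> i /\ Rabs (x j - x i) <= r.

Lemma nbr_In x i j : In j (nbr n rf x i) <-> (j < n)%nat /\ Rabs (x j - x i) <= r.
Proof.
  unfold nbr. rewrite filter_In, in_seq.
  destruct (Rle_dec (Rabs (x j - x i)) r); split; intros H; try tauto; try lia;
  destruct H; try discriminate; try contradiction; try split; auto; lia.
Qed.

Lemma nbr_NoDup x i : NoDup (nbr n rf x i).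
Proof. apply NoDup_filter, seq_NoDup. Qed.

Lemma nbr_self x i : (i < n)%nat -> In i (nbr n rf x i).
Proof. intros; apply nbr_In; split; auto. rewrite Rminus_diag, Rabs_R0; auto. Qed.


Lemma proj01_in y : 0 <= proj01 y <= 1.
Proof. unfold proj01, Rmin, Rmax. repeat destruct Rle_dec; lra. Qed.
Lemma proj01_id y : 0 <= y <= 1 -> proj01 y = y.
Proof. unfold proj01, Rmin, Rmax. repeat destruct Rle_dec; lra. Qed.
Lemma proj01_near T d y : 0 <= T <= 1 -> T - d <= y <= T + d -> T - d <= proj01 y <= T + d.
Proof. unfold proj01, Rmin, Rmax. repeat destruct Rle_dec; lra. Qed.
Lemma proj01_le y : proj01 y <= Rmax 0 y.
Proof. unfold proj01, Rmin, Rmax. repeat destruct Rle_dec; lra. Qed.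

Lemma O_In x i j : In j (filter (noti i) (nbr n rf x i)) <-> ((j < n)%nat /\ Rabs (x j - x i) <= r) /\ j <> i.
Proof. rewrite in_noti, nbr_In. tauto. Qed.

Lemma step_iso x u bb i : (i < n)%nat -> 0 <= x i <= 1 -> ~ NI x i ->
  step n rf x u bb i = x i.
Proof.
  intros Hi Hx HN. unfold step.
  assert (HO : filter (noti i) (nbr n rf x i) = []).
  { destruct (filter (noti i) (nbr n rf x i)) as [|j l] eqn:E; auto.
    exfalso. assert (Hj : In j (filter (noti i) (nbr n rf x i))) by (rewrite E; left; auto).
    apply O_In in Hj. apply HN. exists j. tauto. }
  destruct (split_i x i (nbr n rf x i) (nbr_NoDup x i) (nbr_self x i Hi)) as [_ L].
  change (fun j => negb (j =? i)%nat) with (noti i). rewrite HO. rewrite HO in L.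
  rewrite L. simpl. rewrite proj01_id; lra.
Qed.

Lemma step_gen x u bb i c d : (i < n)%nat -> (forall j, u j i = c) ->
  (forall j, In j (filter (noti i) (nbr n rf x i)) -> - d <= bb j i <= d) ->
  exists E, Rabs E <= INR (length (filter (noti i) (nbr n rf x i))) * d /\
  step n rf x u bb i = proj01 ((sumR (map x (nbr n rf x i)) +
      INR (length (filter (noti i) (nbr n rf x i))) * c + E) / INR (length (nbr n rf x i))).
Proof.
  intros Hi Hu Hb. unfold step.
  change (fun j => negb (j =? i)%nat) with (noti i).
  set (O := filter (noti i) (nbr n rf x i)).
  exists (sumR (map (fun j => bb j i) O)). split.
  - assert (B := sumR_bound (fun j => bb j i) (-d) d O Hb).
    apply abs_le_i. lra.
  - f_equal. f_equal.
    destruct (split_i x i (nbr n rf x i) (nbr_NoDup x i) (nbr_self x i Hi)) as [E1 _].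
    rewrite E1. fold O.
    rewrite (sumR_plus (fun j => x j + u j i) (fun j => bb j i)).
    rewrite (sumR_plus x (fun j => u j i)).
    rewrite (map_ext (fun j => u j i) (fun _ => c)) by auto.
    rewrite sumR_const. lra.
Qed.


Definition clipc (w y : R) := Rmax (- w) (Rmin w y).

Lemma clipc_id w y : Rabs y <= w -> clipc w y = y.
Proof. intros H. apply abs_le in H. unfold clipc, Rmin, Rmax. repeat destruct Rle_dec; lra. Qed.

Lemma clipc_bnd w y : 0 <= w -> - w <= clipc w y <= w.
Proof. intros. unfold clipc, Rmin, Rmax. repeat destruct Rle_dec; lra. Qed.

Lemma ctrl_step x u bb i d eta T : (i < n)%nat -> 0 < d -> d < eta ->
  (2 <= length (nbr n rf x i))%nat ->
  (forall j, u j i = clipc (eta - d) ((INR (length (nbr n rf x i)) * T - sumR (map x (nbr n rf x i)))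
                                      / INR (length (filter (noti i) (nbr n rf x i))))) ->
  Rabs (T - sumR (map x (nbr n rf x i)) / INR (length (nbr n rf x i))) <= (eta - d) / 2 ->
  0 <= T <= 1 ->
  (forall j, In j (filter (noti i) (nbr n rf x i)) -> - d <= bb j i <= d) ->
  T - d <= step n rf x u bb i <= T + d.
Proof.
  intros Hi Hd Hde Hm Hu HT HT1 Hb.
  destruct (step_gen x u bb i _ d Hi Hu Hb) as [E [HE ->]].
  destruct (split_i x i (nbr n rf x i) (nbr_NoDup x i) (nbr_self x i Hi)) as [_ L].
  set (Sx := sumR (map x (nbr n rf x i))) in *.
  set (k := length (filter (noti i) (nbr n rf x i))) in *.
  rewrite L in *. rewrite S_INR in *.
  assert (Hk : (1 <= k)%nat) by lia.
  apply le_INR in Hk. simpl in Hk.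
  set (kk := INR k) in *.
  assert (Hv : Rabs ((((kk + 1) * T - Sx) / kk)) <= eta - d).
  { replace (((kk + 1) * T - Sx) / kk) with ((kk + 1) / kk * (T - Sx / (kk + 1))) by (field; lra).
    rewrite Rabs_mult. rewrite (Rabs_right ((kk+1)/kk)).
    2:{ apply Rle_ge. apply div_le_r; lra. }
    apply Rle_trans with (2 * ((eta - d) / 2)); [|lra].
    apply Rmult_le_compat; [apply div_le_r; lra | apply Rabs_pos | apply div_le_l; lra | lra]. }
  rewrite clipc_id by auto.
  apply proj01_near; auto.
  replace ((Sx + kk * (((kk + 1) * T - Sx) / kk) + E) / (kk + 1)) with (T + E / (kk + 1)) by (field; lra).
  apply abs_le in HE.
  assert (E / (kk+1) <= d /\ - d <= E / (kk + 1)).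
  { split. apply div_le_l; nra. apply div_le_r; nra. }
  lra.
Qed.


Lemma NI_len x i : (i < n)%nat -> NI x i -> (2 <= length (nbr n rf x i))%nat.
Proof.
  intros Hi [j [Hj [Hji Hd]]].
  destruct (split_i x i (nbr n rf x i) (nbr_NoDup x i) (nbr_self x i Hi)) as [_ L].
  rewrite L. destruct (filter (noti i) (nbr n rf x i)) eqn:E.
  - exfalso. assert (In j (filter (noti i) (nbr n rf x i))) by (apply O_In; tauto).
    rewrite E in H; destruct H.
  - simpl; lia.
Qed.

Lemma down_y x u bb i d eta : (i < n)%nat -> NI x i -> 0 < d -> 2 * d < eta ->
  (forall j, u j i = - (eta - d)) ->
  (forall j, In j (filter (noti i) (nbr n rf x i)) -> - d <= bb j i <= d) ->
  exists y, step n rf x u bb i = proj01 y /\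
    y <= sumR (map x (nbr n rf x i)) / INR (length (nbr n rf x i)) - (eta - 2 * d) / 2.
Proof.
  intros Hi HN Hd Hde Hu Hb.
  assert (Hm := NI_len x i Hi HN).
  destruct (step_gen x u bb i _ d Hi Hu Hb) as [E [HE ->]].
  eexists; split; [reflexivity|].
  destruct (split_i x i (nbr n rf x i) (nbr_NoDup x i) (nbr_self x i Hi)) as [_ L].
  set (Sx := sumR (map x (nbr n rf x i))) in *.
  set (k := length (filter (noti i) (nbr n rf x i))) in *.
  rewrite L in *. rewrite S_INR in *.
  assert (Hk : (1 <= k)%nat) by lia.
  apply le_INR in Hk. simpl in Hk.
  set (kk := INR k) in *. apply abs_le in HE.
  assert (Sx / (kk + 1) - (eta - 2 * d) / 2 - (Sx + kk * - (eta - d) + E) / (kk + 1)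
          = (kk * (eta - d) - E - (kk + 1) * (eta - 2 * d) / 2) / (kk + 1)) by (field; lra).
  assert (0 <= (kk * (eta - d) - E - (kk + 1) * (eta - 2 * d) / 2) / (kk + 1)).
  { apply div_le_r; [lra|]. assert (0 <= (kk - 1) * (eta - 2*d)) by (apply Rmult_le_pos; lra). lra. }
  lra.
Qed.

Lemma avg_le x i K : (i < n)%nat -> (forall j, In j (nbr n rf x i) -> x j <= K) ->
  sumR (map x (nbr n rf x i)) / INR (length (nbr n rf x i)) <= K.
Proof.
  intros Hi H. assert (Hp : (1 <= length (nbr n rf x i))%nat).
  { destruct (nbr n rf x i) eqn:E; [|simpl; lia]. assert (Hs := nbr_self x i Hi). rewrite E in Hs; destruct Hs. }
  apply le_INR in Hp; simpl in Hp.
  apply div_le_l; [lra|].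
  assert (B := sumR_le x K _ H). lra.
Qed.

Lemma avg_ge x i K : (i < n)%nat -> (forall j, In j (nbr n rf x i) -> K <= x j) ->
  K <= sumR (map x (nbr n rf x i)) / INR (length (nbr n rf x i)).
Proof.
  intros Hi H. assert (Hp : (1 <= length (nbr n rf x i))%nat).
  { destruct (nbr n rf x i) eqn:E; [|simpl; lia]. assert (Hs := nbr_self x i Hi). rewrite E in Hs; destruct Hs. }
  apply le_INR in Hp; simpl in Hp.
  apply div_le_r; [lra|].
  assert (B := sumR_ge x K _ H). lra.
Qed.

Lemma avg_lt x i K : (i < n)%nat -> (forall j, In j (nbr n rf x i) -> x j < K) ->
  sumR (map x (nbr n rf x i)) / INR (length (nbr n rf x i)) < K.
Proof.
  intros Hi H. assert (Hp : (1 <= length (nbr n rf x i))%nat).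
  { destruct (nbr n rf x i) eqn:E; [|simpl; lia]. assert (Hs := nbr_self x i Hi). rewrite E in Hs; destruct Hs. }
  apply le_INR in Hp; simpl in Hp.
  apply div_lt_l; [lra|].
  assert (B := sumR_lt x K _ ltac:(intro E; assert (Hs := nbr_self x i Hi); rewrite E in Hs; destruct Hs) H). lra.
Qed.


Lemma NI_sym x i j : (i < n)%nat -> (j < n)%nat -> j <> i -> Rabs (x j - x i) <= r -> NI x i /\ NI x j.
Proof.
  intros. split; [exists j; auto|]. exists i. repeat split; auto. rewrite Rabs_minus_sym; auto.
Qed.

Lemma down_step x u bb d eta B : in01 n x -> 0 < d -> 2 * d < eta -> 0 <= B ->
  (forall i, (i < n)%nat -> NI x i -> x i <= B) ->
  (forall j i, u j i = - (eta - d)) ->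
  (forall i j, (i < n)%nat -> In j (filter (noti i) (nbr n rf x i)) -> - d <= bb j i <= d) ->
  forall i, (i < n)%nat -> NI (step n rf x u bb) i ->
    step n rf x u bb i <= Rmax 0 (B - Rmin ((eta - 2 * d) / 2) r).
Proof.
  intros Hx Hd Hde HB HNB Hu Hb i Hi HN'.
  assert (Hs1 : Rmin ((eta - 2 * d) / 2) r <= (eta - 2 * d) / 2) by apply Rmin_l.
  assert (Hs2 : Rmin ((eta - 2 * d) / 2) r <= r) by apply Rmin_r.
  assert (Hmx : forall a b, a <= b -> Rmax 0 a <= Rmax 0 b) by (intros; unfold Rmax; repeat destruct Rle_dec; lra).
  assert (Hmx2 : forall a, a <= Rmax 0 a) by (intros; unfold Rmax; repeat destruct Rle_dec; lra).
  destruct (classic (NI x i)) as [HNi|HNi].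
  - destruct (down_y x u bb i d eta Hi HNi Hd Hde (fun j => Hu j i) (fun j Hj => Hb i j Hi Hj)) as [y [-> Hy]].
    assert (Ha : sumR (map x (nbr n rf x i)) / INR (length (nbr n rf x i)) <= B).
    { apply avg_le; auto. intros j Hj. apply nbr_In in Hj. destruct Hj as [Hj Hjr].
      destruct (Nat.eq_dec j i) as [->|Hne]; [apply HNB; auto|].
      apply HNB; auto. apply (NI_sym x i j Hi Hj Hne Hjr). }
    eapply Rle_trans; [apply proj01_le|]. apply Hmx. lra.
  - assert (Hxi : step n rf x u bb i = x i) by (apply step_iso; auto).
    destruct HN' as [q [Hq [Hqi Hqr]]]. rewrite Hxi in Hqr.
    assert (HNq : NI x q).
    { destruct (classic (NI x q)) as [|HNq]; auto. exfalso.
      rewrite (step_iso x u bb q Hq (Hx q Hq) HNq) in Hqr. apply HNi. exists q; auto. }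
    destruct (classic (exists a, In a (nbr n rf x q) /\ x i - r <= x a)) as [[a [Ha Hai]]|Hno].
    + apply nbr_In in Ha. destruct Ha as [Ha Har].
      assert (Hai' : a <> i).
      { intros ->. apply HNi. exists q. repeat split; auto. rewrite Rabs_minus_sym; auto. }
      assert (Hra : r < Rabs (x a - x i)).
      { apply Rnot_le_lt. intro. apply HNi. exists a; auto. }
      assert (HNa : NI x a).
      { destruct (Nat.eq_dec a q) as [->|Hne]; auto. apply (NI_sym x q a Hq Ha Hne Har). }
      assert (x a <= B) by auto.
      assert (x i < B - r).
      { revert Hra. unfold Rabs. destruct Rcase_abs; lra. }
      apply Rle_trans with (B - Rmin ((eta - 2 * d) / 2) r); [lra | apply Hmx2].
    + exfalso.
      assert (Hall : forall a, In a (nbr n rf x q) -> x a < x i - r).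
      { intros a Ha. apply Rnot_le_lt. intro. apply Hno. eauto. }
      destruct (down_y x u bb q d eta Hq HNq Hd Hde (fun j => Hu j q) (fun j Hj => Hb q j Hq Hj)) as [y [Ey Hy]].
      assert (Hav := avg_lt x q _ Hq Hall).
      assert (Hxq := Hall q (nbr_self x q Hq)). assert (Hxq0 := Hx q Hq).
      assert (Hp := proj01_le y). rewrite <- Ey in Hp.
      assert (Rmax 0 y < x i - r) by (unfold Rmax; destruct Rle_dec; lra).
      apply abs_le in Hqr. lra.
Qed.


Fixpoint pminl (x : nat -> R) (th : R) (l : list nat) : option R :=
  match l with
  | [] => None
  | j :: l' => if Rlt_dec th (x j) then
                 match pminl x th l' with None => Some (x j) | Some v => Some (Rmin (x j) v) end
               else pminl x th l'
  end.

Lemma pminl_none x th l : pminl x th l = None -> forall j, In j l -> x j <= th.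
Proof.
  induction l as [|a l IH]; simpl; [intros _ j []|].
  destruct (Rlt_dec th (x a)); [destruct (pminl x th l); discriminate|].
  intros E j [<-|Hj]; [lra|auto].
Qed.

Lemma pminl_some x th l v : pminl x th l = Some v ->
  (exists p, In p l /\ th < x p /\ v = x p) /\ (forall j, In j l -> th < x j -> v <= x j).
Proof.
  revert v; induction l as [|a l IH]; simpl; intros v; [discriminate|].
  destruct (Rlt_dec th (x a)).
  - destruct (pminl x th l) as [w|] eqn:E; intros H; injection H as <-.
    + destruct (IH w eq_refl) as [[p [Hp [Hp2 ->]]] Hm]. split.
      * apply Rmin_case_strong; intros; [exists a | exists p]; auto.
      * intros j [<-|Hj] Hj2; [apply Rmin_l|]. eapply Rle_trans; [apply Rmin_r|]. auto.
    + split; [exists a; auto|]. intros j [<-|Hj] Hj2; [lra|].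
      assert (H := pminl_none x th l E j Hj). lra.
  - intros H. destruct (IH v H) as [[p [Hp [Hp2 ->]]] Hm]. split; [exists p; auto|].
    intros j [<-|Hj] Hj2; [lra|auto].
Qed.

Lemma pminl_ext x th1 th2 l : (forall j, In j l -> (th1 < x j <-> th2 < x j)) ->
  pminl x th1 l = pminl x th2 l.
Proof.
  induction l as [|a l IH]; simpl; intros H; auto.
  rewrite IH by auto. assert (Ha := H a (or_introl eq_refl)).
  destruct (Rlt_dec th1 (x a)), (Rlt_dec th2 (x a)); tauto.
Qed.


Definition avg x i := sumR (map x (nbr n rf x i)) / INR (length (nbr n rf x i)).
Definition target z d s x i :=
  let A := avg x i in
  match pminl x (x i + r) (seq 0 n) with
  | None => if Rle_dec (Rabs (z - A)) s then z else if Rlt_dec A z then A + s else A - s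
  | Some P => if Rlt_dec (A + s + d) (P - r) then A + s else P - r + d
  end.
Definition ctrl z eta d s x i :=
  clipc (eta - d) ((INR (length (nbr n rf x i)) * target z d s x i - sumR (map x (nbr n rf x i)))
                   / INR (length (filter (noti i) (nbr n rf x i)))).

Definition Inv x (C : nat -> bool) lo hi :=
  in01 n x /\ (forall i, (i < n)%nat -> C i = true -> lo <= x i <= hi) /\ hi - lo <= r /\ 0 <= lo /\
  (exists i j, (i < n)%nat /\ (j < n)%nat /\ i <> j /\ C i = true /\ C j = true) /\
  (forall i, (i < n)%nat -> C i = false -> hi + r < x i) /\
  (forall i j, (i < n)%nat -> (j < n)%nat -> i <> j -> C i = false -> C j = false -> r < Rabs (x i - x j)).

Definition cnt (C : nat -> bool) := length (filter (fun j => negb (C j)) (seq 0 n)).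

Lemma mem_nbr x C lo hi i : Inv x C lo hi -> (i < n)%nat -> C i = true ->
  nbr n rf x i = filter C (seq 0 n).
Proof.
  intros (Hx & Hm & Hlh & Hlo & _ & Ho & _) Hi Ci. unfold nbr. apply filter_ext_in.
  intros j Hj. apply in_seq in Hj. assert (Hj' : (j < n)%nat) by lia.
  assert (Hmi := Hm i Hi Ci).
  destruct (C j) eqn:Cj.
  - assert (Hmj := Hm j Hj' Cj). destruct Rle_dec as [|Hn]; auto. exfalso; apply Hn.
    apply abs_le_i; lra.
  - assert (Hoj := Ho j Hj' Cj). destruct Rle_dec as [Hl|]; auto. exfalso.
    apply abs_le in Hl. lra.
Qed.

Lemma out_iso x C lo hi i : Inv x C lo hi -> (i < n)%nat -> C i = false -> ~ NI x i.
Proof.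
  intros (Hx & Hm & Hlh & Hlo & _ & Ho & Hoo) Hi Ci [j [Hj [Hji Hd]]].
  apply abs_le in Hd. destruct (C j) eqn:Cj.
  - assert (Hmj := Hm j Hj Cj). assert (Hoi := Ho i Hi Ci). lra.
  - assert (H := Hoo j i Hj Hi Hji Cj Ci). apply abs_le_i in Hd. lra.
Qed.

Lemma mem_pmin x C lo hi i : Inv x C lo hi -> (i < n)%nat -> C i = true ->
  forall j, (j < n)%nat -> (x i + r < x j <-> C j = false).
Proof.
  intros (Hx & Hm & Hlh & Hlo & _ & Ho & _) Hi Ci j Hj.
  assert (Hmi := Hm i Hi Ci).
  destruct (C j) eqn:Cj.
  - assert (Hmj := Hm j Hj Cj). split; intros; [lra|discriminate].
  - assert (Hoj := Ho j Hj Cj). split; intros; auto; lra.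
Qed.

Lemma mem_target x C lo hi i i' z d s : Inv x C lo hi -> (i < n)%nat -> C i = true ->
  (i' < n)%nat -> C i' = true -> target z d s x i = target z d s x i'.
Proof.
  intros HI Hi Ci Hi' Ci'. unfold target, avg.
  rewrite (mem_nbr x C lo hi i HI Hi Ci), (mem_nbr x C lo hi i' HI Hi' Ci').
  rewrite (pminl_ext x (x i + r) (x i' + r)); auto.
  intros j Hj. apply in_seq in Hj. rewrite (mem_pmin x C lo hi i HI Hi Ci j), (mem_pmin x C lo hi i' HI Hi' Ci' j); try lia. tauto.
Qed.


Lemma mem_NI x C lo hi i : Inv x C lo hi -> (i < n)%nat -> C i = true -> NI x i.
Proof.
  intros HI Hi Ci. destruct HI as (Hx & Hm & Hlh & Hlo & [a [b [Ha [Hb [Hab [Ca Cb]]]]]] & _).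
  assert (Hmi := Hm i Hi Ci).
  destruct (Nat.eq_dec a i) as [->|Hai].
  - exists b. repeat split; auto. assert (Hmb := Hm b Hb Cb). apply abs_le_i; lra.
  - exists a. repeat split; auto. assert (Hma := Hm a Ha Ca). apply abs_le_i; lra.
Qed.

Lemma mem_step x u bb C lo hi z eta d s i i0 : Inv x C lo hi -> 0 < d -> d < eta ->
  (i < n)%nat -> C i = true -> (i0 < n)%nat -> C i0 = true ->
  (forall j i, u j i = ctrl z eta d s x i) ->
  (forall i j, (i < n)%nat -> In j (filter (noti i) (nbr n rf x i)) -> - d <= bb j i <= d) ->
  Rabs (target z d s x i0 - avg x i0) <= (eta - d) / 2 ->
  0 <= target z d s x i0 <= 1 ->
  target z d s x i0 - d <= step n rf x u bb i <= target z d s x i0 + d.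
Proof.
  intros HI Hd Hde Hi Ci Hi0 Ci0 Hu Hb HT HT1.
  rewrite <- (mem_target x C lo hi i i0 z d s HI Hi Ci Hi0 Ci0) in *.
  refine (ctrl_step x u bb i d eta _ Hi Hd Hde _ _ _ HT1 (fun j Hj => Hb i j Hi Hj)).
  - apply NI_len; auto. apply (mem_NI x C lo hi i HI Hi Ci).
  - intros j; rewrite Hu; reflexivity.
  - replace (sumR (map x (nbr n rf x i)) / INR (length (nbr n rf x i))) with (avg x i0); auto.
    unfold avg. rewrite (mem_nbr x C lo hi i HI Hi Ci), (mem_nbr x C lo hi i0 HI Hi0 Ci0). reflexivity.
Qed.

Lemma avg_mem x C lo hi i0 : Inv x C lo hi -> (i0 < n)%nat -> C i0 = true -> lo <= avg x i0 <= hi.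
Proof.
  intros HI Hi0 Ci0. unfold avg. split.
  - apply avg_ge; auto. intros j Hj. rewrite (mem_nbr x C lo hi i0 HI Hi0 Ci0) in Hj.
    apply filter_In in Hj. destruct Hj as [Hj Cj]. apply in_seq in Hj.
    destruct HI as (_ & Hm & _). destruct (Hm j); auto; lia.
  - apply avg_le; auto. intros j Hj. rewrite (mem_nbr x C lo hi i0 HI Hi0 Ci0) in Hj.
    apply filter_In in Hj. destruct Hj as [Hj Cj]. apply in_seq in Hj.
    destruct HI as (_ & Hm & _). destruct (Hm j); auto; lia.
Qed.

Lemma cnt_lt (C C' : nat -> bool) p l : (forall j, C j = true -> C' j = true) -> In p l -> C p = false -> C' p = true ->
  (length (filter (fun j => negb (C' j)) l) < length (filter (fun j => negb (C j)) l))%nat.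
Proof.
  intros HC. induction l as [|a l IH]; simpl; intros Hp Cp C'p; [destruct Hp|].
  assert (Hle : forall l, (length (filter (fun j => negb (C' j)) l) <= length (filter (fun j => negb (C j)) l))%nat).
  { induction l0 as [|b l0 IH0]; simpl; auto.
    destruct (C b) eqn:Cb; [rewrite (HC b Cb)|]; destruct (C' b); simpl; lia. }
  destruct Hp as [<-|Hp].
  - rewrite Cp, C'p. simpl. specialize (Hle l). lia.
  - specialize (IH Hp Cp C'p). destruct (C a) eqn:Ca; [rewrite (HC a Ca)|]; destruct (C' a); simpl; lia.
Qed.


Lemma step01 x u bb i : 0 <= step n rf x u bb i <= 1.
Proof. unfold step. apply proj01_in. Qed.

Lemma out_step x u bb C lo hi i : Inv x C lo hi -> (i < n)%nat -> C i = false -> step n rf x u bb i = x i.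
Proof.
  intros HI Hi Ci. apply step_iso; auto. destruct HI as [Hx _]; auto. apply (out_iso x C lo hi i HI Hi Ci).
Qed.

Lemma p2_step x u bb C lo hi z eta d s : 0 < d -> 2 * d <= r -> 8 * d <= eta -> s = (eta - 5 * d) / 2 ->
  Inv x C lo hi -> (exists p, (p < n)%nat /\ C p = false) ->
  (forall j i, u j i = ctrl z eta d s x i) ->
  (forall i j, (i < n)%nat -> In j (filter (noti i) (nbr n rf x i)) -> - d <= bb j i <= d) ->
  exists C' lo' hi', Inv (step n rf x u bb) C' lo' hi' /\
    (1 - lo') + (s - d) * INR (cnt C') <= (1 - lo) + (s - d) * INR (cnt C) - (s - d).
Proof.
  intros Hd Hdr Hde Hs HI [p0 [Hp0 Cp0]] Hu Hb.
  assert (HI' := HI). destruct HI' as (Hx & Hm & Hlh & Hlo & [i0 [j0 [Hi0 [Hj0 [Hij [Ci0 Cj0]]]]]] & Ho & Hoo).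
  assert (HA := avg_mem x C lo hi i0 HI Hi0 Ci0).
  set (A := avg x i0) in *.
  destruct (pminl x (x i0 + r) (seq 0 n)) as [P|] eqn:EP.
  2:{ exfalso. assert (H := pminl_none x _ _ EP p0 ltac:(apply in_seq; lia)).
      assert (H2 := proj2 (mem_pmin x C lo hi i0 HI Hi0 Ci0 p0 Hp0) Cp0). lra. }
  destruct (pminl_some x _ _ _ EP) as [[p [Hp [Hp1 ->]]] HPm].
  apply in_seq in Hp. assert (Hpn : (p < n)%nat) by lia.
  assert (Cp : C p = false) by (apply (mem_pmin x C lo hi i0 HI Hi0 Ci0 p Hpn); auto).
  assert (HPm' : forall j, (j < n)%nat -> C j = false -> x p <= x j).
  { intros j Hj Cj. apply HPm; [apply in_seq; lia|]. apply (mem_pmin x C lo hi i0 HI Hi0 Ci0 j Hj); auto. }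
  assert (Hxp := Ho p Hpn Cp). assert (Hxp1 := Hx p Hpn).
  assert (HT : target z d s x i0 = if Rlt_dec (A + s + d) (x p - r) then A + s else x p - r + d).
  { unfold target. rewrite EP. reflexivity. }
  set (x' := step n rf x u bb).
  assert (Hout : forall i, (i < n)%nat -> C i = false -> x' i = x i).
  { intros; apply (out_step x u bb C lo hi); auto. }
  destruct (Rlt_dec (A + s + d) (x p - r)) as [Hlt|Hge].
  -
    assert (Hmem : forall i, (i < n)%nat -> C i = true -> A + s - d <= x' i <= A + s + d).
    { intros i Hi Ci. rewrite <- HT. apply (mem_step x u bb C lo hi z eta d s i i0); auto; try lra;
      rewrite HT; fold A; try apply abs_le_i; lra. }
    exists C, (A + s - d), (A + s + d). split.
    + split; [intros i Hi; apply step01|]. split; auto. split; [lra|]. split; [lra|]. split.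
      { exists i0, j0; auto. }
      split.
      * intros i Hi Ci. rewrite Hout by auto. assert (HPi := HPm' i Hi Ci). lra.
      * intros i j Hi Hj Hne Ci Cj. rewrite !Hout by auto. auto.
    + lra.
  -
    set (T := x p - r + d).
    assert (Hmem : forall i, (i < n)%nat -> C i = true -> T - d <= x' i <= T + d).
    { intros i Hi Ci. unfold T. rewrite <- HT. apply (mem_step x u bb C lo hi z eta d s i i0); auto; try lra;
      rewrite HT; fold A; try apply abs_le_i; lra. }
    set (C' := fun j => orb (C j) (Nat.eqb j p)).
    exists C', (x p - r), (x p). split.
    + split; [intros i Hi; apply step01|]. split.
      { intros i Hi Ci'. unfold C' in Ci'. destruct (C i) eqn:Ci.
        - assert (H := Hmem i Hi Ci). unfold T in H. lra.
        - simpl in Ci'. apply Nat.eqb_eq in Ci'. subst i. rewrite Hout by auto. lra. }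
      split; [lra|]. split; [lra|]. split.
      { exists i0, j0. unfold C'. rewrite Ci0, Cj0. auto. }
      split.
      * intros i Hi Ci'. unfold C' in Ci'. apply orb_false_iff in Ci'. destruct Ci' as [Ci Cip].
        apply Nat.eqb_neq in Cip. rewrite Hout by auto.
        assert (HPi := HPm' i Hi Ci). assert (Hrp := Hoo i p Hi Hpn Cip Ci Cp). 
        revert Hrp; unfold Rabs; destruct Rcase_abs; lra.
      * intros i j Hi Hj Hne Ci Cj. unfold C' in Ci, Cj. apply orb_false_iff in Ci, Cj.
        rewrite !Hout by tauto. apply Hoo; tauto.
    + assert (Hc : (cnt C' < cnt C)%nat).
      { apply (cnt_lt C C' p). intros j Cj; unfold C'; rewrite Cj; auto. apply in_seq; lia. auto.
        unfold C'; rewrite Nat.eqb_refl, orb_true_r; auto. }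
      assert (Hc' : INR (S (cnt C')) <= INR (cnt C)) by (apply le_INR; lia).
      rewrite S_INR in Hc'. assert (0 <= s - d) by lra. nra.
Qed.


Lemma p3_step x u bb C lo hi z eta d s D : 0 < d -> 2 * d <= r -> 8 * d <= eta -> s = (eta - 5 * d) / 2 ->
  0 <= z <= 1 ->
  Inv x C lo hi -> (forall i, (i < n)%nat -> C i = true) ->
  (forall i, (i < n)%nat -> Rabs (x i - z) <= D) ->
  (forall j i, u j i = ctrl z eta d s x i) ->
  (forall i j, (i < n)%nat -> In j (filter (noti i) (nbr n rf x i)) -> - d <= bb j i <= d) ->
  (forall i, (i < n)%nat -> Rabs (step n rf x u bb i - z) <= d) \/
  (s < D /\ exists lo' hi', Inv (step n rf x u bb) C lo' hi' /\
      forall i, (i < n)%nat -> Rabs (step n rf x u bb i - z) <= D - (s - d)).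
Proof.
  intros Hd Hdr Hde Hs Hz HI HC HD Hu Hb.
  assert (HI' := HI). destruct HI' as (Hx & Hm & Hlh & Hlo & [i0 [j0 [Hi0 [Hj0 [Hij [Ci0 Cj0]]]]]] & Ho & Hoo).
  set (A := avg x i0).
  assert (HA : z - D <= A <= z + D).
  { unfold A, avg. split.
    - apply avg_ge; auto. intros j Hj. apply nbr_In in Hj. destruct Hj as [Hj _].
      assert (Hq := abs_le _ _ (HD j Hj)). lra.
    - apply avg_le; auto. intros j Hj. apply nbr_In in Hj. destruct Hj as [Hj _].
      assert (Hq := abs_le _ _ (HD j Hj)). lra. }
  assert (HA01 : 0 <= A <= 1).
  { unfold A, avg. split.
    - apply avg_ge; auto. intros j Hj. apply nbr_In in Hj. destruct Hj as [Hj _]. apply Hx; auto.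
    - apply avg_le; auto. intros j Hj. apply nbr_In in Hj. destruct Hj as [Hj _]. apply Hx; auto. }
  assert (EP : pminl x (x i0 + r) (seq 0 n) = None).
  { destruct (pminl x (x i0 + r) (seq 0 n)) as [v|] eqn:E; auto. exfalso.
    destruct (pminl_some x _ _ _ E) as [[p [Hp [Hp1 _]]] _]. apply in_seq in Hp.
    assert (Hpn : (p < n)%nat) by lia.
    assert (C p = false) by (apply (mem_pmin x C lo hi i0 HI Hi0 Ci0 p Hpn); auto).
    rewrite HC in H; auto; discriminate. }
  assert (HT : target z d s x i0 =
     if Rle_dec (Rabs (z - A)) s then z else if Rlt_dec A z then A + s else A - s).
  { unfold target. rewrite EP. reflexivity. }
  set (x' := step n rf x u bb).
  assert (Hgen : forall i, (i < n)%nat -> Rabs (target z d s x i0 - A) <= (eta - d) / 2 ->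
             0 <= target z d s x i0 <= 1 -> target z d s x i0 - d <= x' i <= target z d s x i0 + d).
  { intros i Hi H1 H2. apply (mem_step x u bb C lo hi z eta d s i i0); auto; lra. }
  destruct (Rle_dec (Rabs (z - A)) s) as [Hle|Hgt].
  - left.
    intros i Hi.
    assert (HT' : target z d s x i0 = z).
    { rewrite HT. destruct (Rle_dec (Rabs (z - A)) s); [reflexivity|contradiction]. }
    rewrite HT' in Hgen.
    assert (H1 : Rabs (z - A) <= (eta - d) / 2) by lra.
    assert (H := Hgen i Hi H1 ltac:(lra)). apply abs_le_i; lra.
  - right. apply Rnot_le_lt in Hgt.
    assert (HAz : s < Rabs (z - A)) by auto.
    split; [assert (Hq := abs_le _ _ (HD i0 Hi0)); revert Hgt; unfold Rabs; destruct Rcase_abs; lra|].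
    set (T := if Rlt_dec A z then A + s else A - s).
    assert (HT' : target z d s x i0 = T) by (rewrite HT; destruct (Rle_dec (Rabs (z - A)) s); [lra|reflexivity]).
    rewrite HT' in Hgen.
    assert (HTz : Rabs (T - A) <= s /\ 0 <= T <= 1 /\ Rabs (T - z) <= D - s).
    { unfold T. revert Hgt. unfold Rabs. repeat destruct Rcase_abs; destruct Rlt_dec; intros; repeat split; lra. }
    destruct HTz as [HTA [HT01 HTz]].
    assert (Hs2 : s <= (eta - d) / 2) by lra.
    assert (Hnew : forall i, (i < n)%nat -> T - d <= x' i <= T + d) by (intros; apply Hgen; auto; lra).
    exists (Rmax 0 (T - d)), (T + d). split.
    + split.
      * intros i Hi; apply step01.
      * split. { intros i Hi _. assert (H := Hnew i Hi). assert (H2 := step01 x u bb i).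
                 unfold Rmax; destruct Rle_dec; fold x' in H2; lra. }
        split. { unfold Rmax; destruct Rle_dec; lra. }
        split. { unfold Rmax; destruct Rle_dec; lra. }
        split. { exists i0, j0; auto. }
        split. { intros i Hi Ci. rewrite HC in Ci; auto; discriminate. }
        intros i j Hi Hj _ Ci. rewrite HC in Ci; auto; discriminate.
    + intros i Hi. assert (H := Hnew i Hi). apply abs_le in HTz. apply abs_le_i. fold x'. lra.
Qed.

End S1.
Lemma pigeon n x r : (2 <= n)%nat -> in01 n x -> 1 / INR (n - 1) <= r ->
  exists i j, (i < n)%nat /\ (j < n)%nat /\ i <> j /\ Rabs (x i - x j) <= r.
Proof.
  intros Hn Hx Hr. apply NNPP. intros Hno.
  assert (Hall : forall i j, (i < n)%nat -> (j < n)%nat -> i <> j -> r < Rabs (x i - x j)).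
  { intros i j Hi Hj Hij. apply Rnot_le_lt. intro. apply Hno. exists i, j; auto. }
  set (N1 := INR (n - 1)).
  assert (HN1 : 1 <= N1) by (unfold N1; replace 1 with (INR 1) by reflexivity; apply le_INR; lia).
  assert (HN1' : N1 = INR (n - 2) + 1) by (unfold N1; replace (n - 1)%nat with (S (n - 2)) by lia; apply S_INR).
  set (y := fun i => x i * N1).
  set (f := fun i => Nat.min (Z.to_nat (up (y i) - 1)) (n - 2)).
  assert (Hf : forall i, (i < n)%nat -> INR (f i) <= y i <= INR (f i) + 1 /\ (f i <= n - 2)%nat).
  { intros i Hi. destruct (archimed (y i)) as [A1 A2].
    assert (Hy : 0 <= y i <= N1) by (unfold y; destruct (Hx i Hi); nra).
    assert (Hk : (0 <= up (y i) - 1)%Z).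
    { apply Z.lt_le_pred. apply lt_IZR. simpl. lra. }
    assert (Ek : INR (Z.to_nat (up (y i) - 1)) = IZR (up (y i) - 1)).
    { rewrite INR_IZR_INZ, Z2Nat.id; auto. }
    rewrite minus_IZR in Ek. simpl in Ek.
    unfold f. split; [|lia].
    destruct (Nat.le_ge_cases (Z.to_nat (up (y i) - 1)) (n - 2)) as [Hle|Hge].
    - rewrite Nat.min_l by auto. rewrite Ek. lra.
    - rewrite Nat.min_r by auto. apply le_INR in Hge. lra. }
  assert (Hinj : forall i j, (i < n)%nat -> (j < n)%nat -> f i = f j -> i = j).
  { intros i j Hi Hj E. destruct (Nat.eq_dec i j) as [|Hij]; auto. exfalso.
    destruct (Hf i Hi) as [[Fi1 Fi2] _]. destruct (Hf j Hj) as [[Fj1 Fj2] _]. rewrite E in Fi1, Fi2.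
    assert (H := Hall i j Hi Hj Hij).
    assert (Habs : Rabs (y i - y j) <= 1) by (apply abs_le_i; lra).
    unfold y in Habs. rewrite <- Rmult_minus_distr_r, Rabs_mult, (Rabs_right N1) in Habs by lra.
    assert (Rabs (x i - x j) <= 1 / N1) by (apply div_le_r; lra).
    fold N1 in Hr. lra. }
  assert (ND : NoDup (map f (seq 0 n))).
  { apply NoDup_map_NoDup_ForallPairs; [|apply seq_NoDup].
    intros a b Ha Hb E. apply in_seq in Ha, Hb. apply Hinj; auto; lia. }
  assert (Inc : incl (map f (seq 0 n)) (seq 0 (n - 1))).
  { intros v Hv. apply in_map_iff in Hv. destruct Hv as [i [<- Hi]]. apply in_seq in Hi.
    apply in_seq. destruct (Hf i ltac:(lia)) as [_ H]. lia. }
  assert (L := NoDup_incl_length ND Inc). rewrite length_map, !length_seq in L. lia.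
Qed.

Theorem lemma10 (n : nat) (eta r z alpha : R) :
  (3 <= n)%nat -> 0 < eta -> 0 < r <= 1 -> 1 / INR (n - 1) <= r ->
  0 <= z <= 1 -> 0 < alpha ->
  ftrr n (fun _ => r) eta (Sset n z alpha).
Proof.
  intros Hn Heta [Hr0 Hr1] Hr Hz Hal.
  assert (Hr0' : 0 <= r) by lra.
  set (d := Rmin (eta / 8) (Rmin (r / 2) (alpha / 2))).
  assert (Hd1 : d <= eta / 8) by apply Rmin_l.
  assert (Hd2 : d <= r / 2) by (eapply Rle_trans; [apply Rmin_r|apply Rmin_l]).
  assert (Hd3 : d <= alpha / 2) by (eapply Rle_trans; [apply Rmin_r|apply Rmin_r]).
  assert (Hd0 : 0 < d) by (unfold d; repeat apply Rmin_case; lra).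
  set (s := (eta - 5 * d) / 2).
  set (g := s - d).
  assert (Hg : 0 < g) by (unfold g, s; lra).
  set (sig := Rmin ((eta - 2 * d) / 2) r).
  assert (Hsig : 0 < sig) by (unfold sig; apply Rmin_case; lra).
  destruct (INR_unbounded (1 / sig)) as [K HK].
  assert (HK' : 1 <= INR K * sig).
  { apply Rgt_lt in HK. assert (1 / sig * sig = 1) by (field; lra). nra. }
  destruct (INR_unbounded ((1 + g * INR n) / g)) as [N2 HN2].
  assert (HN2' : 1 + g * INR n <= INR N2 * g).
  { apply Rgt_lt in HN2. assert ((1 + g * INR n) / g * g = 1 + g * INR n) by (field; lra). nra. }
  destruct (INR_unbounded (1 / g)) as [N3 HN3].
  assert (HN3' : 1 <= s + INR N3 * g).
  { apply Rgt_lt in HN3. assert (1 / g * g = 1) by (field; lra). assert (0 < s) by (unfold s; lra). nra. }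
  set (T := (K + N2 + N3 + 1)%nat).
  exists T, d. split; [unfold T; lia|]. split; [lra|].
  intros x0 Hx0. right.
  set (ul := fun (t : nat) (h : history) (j i : nat) =>
        if Nat.ltb t K then - (eta - d) else ctrl n r z eta d s (cur x0 h) i).
  exists (fun _ _ _ => d), ul. split.
  { intros t h i Ht Hi. split; [lra|]. intros j _ _. unfold ul. destruct (Nat.ltb t K); [lra|].
    unfold ctrl. assert (H := clipc_bnd (eta - d) ((INR (length (nbr n (fun _ : nat => r) (cur x0 h) i)) * target n r z d s (cur x0 h) i -
       sumR (map (cur x0 h) (nbr n (fun _ : nat => r) (cur x0 h) i))) /
      INR (length (filter (noti i) (nbr n (fun _ : nat => r) (cur x0 h) i)))) ltac:(lra)). lra. }
  intros b Hb.
  set (st := state n (fun _ => r) ul b x0).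
  assert (HS : forall t, st (S t) = step n (fun _ => r) (st t) (ul t (hist n (fun _ => r) ul b x0 t)) (b t)).
  { intros t. unfold st, state. simpl. unfold cur at 1. rewrite last_last. reflexivity. }
  assert (H01 : forall t, in01 n (st t)).
  { intros [|t] i Hi. - unfold st, state. simpl. apply Hx0; auto. - rewrite HS. apply step01. }
  assert (Hb' : forall t, (t < T)%nat -> forall i j, (i < n)%nat ->
      In j (filter (noti i) (nbr n (fun _ => r) (st t) i)) -> - d <= b t j i <= d).
  { intros t Ht i j Hi Hj. apply in_noti in Hj. destruct Hj as [Hj Hji]. apply (Hb t i j); auto. }
  assert (Hu_up : forall t, (K <= t)%nat -> forall j i,
      ul t (hist n (fun _ => r) ul b x0 t) j i = ctrl n r z eta d s (st t) i).
  { intros t Ht j i. unfold ul. replace (Nat.ltb t K) with false by (symmetry; apply Nat.ltb_ge; auto). reflexivity. }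
  assert (Hdown : forall t, (t <= K)%nat -> forall i, (i < n)%nat -> NI n r (st t) i ->
      st t i <= Rmax 0 (1 - INR t * sig)).
  { induction t as [|t IH]; intros Ht i Hi HN.
    - simpl. rewrite Rmult_0_l, Rminus_0_r. destruct (H01 0%nat i Hi). unfold Rmax; destruct Rle_dec; lra.
    - rewrite HS in HN |- *.
      eapply Rle_trans.
      + apply (down_step n r Hr0' (st t) _ (b t) d eta (Rmax 0 (1 - INR t * sig))); auto; try lra.
        * apply Rmax_l.
        * intros i0 Hi0 HN0. apply IH; auto; lia.
        * intros j i0. unfold ul. replace (Nat.ltb t K) with true by (symmetry; apply Nat.ltb_lt; lia). reflexivity.
        * apply Hb'. unfold T; lia.
      + fold sig. rewrite S_INR. unfold Rmax. repeat destruct Rle_dec; lra. }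
  assert (HK0 : forall i, (i < n)%nat -> NI n r (st K) i -> st K i = 0).
  { intros i Hi HN. assert (H := Hdown K (le_n K) i Hi HN). destruct (H01 K i Hi).
    assert (Rmax 0 (1 - INR K * sig) = 0) by (unfold Rmax; destruct Rle_dec; lra). lra. }
  destruct (pigeon n (st K) r ltac:(lia) (H01 K) Hr) as [i1 [j1 [Hi1 [Hj1 [Hij1 Hd1r]]]]].
  destruct (NI_sym n r (st K) j1 i1 Hj1 Hi1 Hij1 Hd1r) as [HNj1 HNi1].
  set (C0 := fun j => if Rle_dec (st K j) 0 then true else false).
  assert (HInv0 : Inv n r (st K) C0 0 0).
  { split; [apply H01|]. split.
    { intros i Hi Ci. unfold C0 in Ci. destruct Rle_dec; [|discriminate]. destruct (H01 K i Hi); lra. }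
    split; [lra|]. split; [lra|]. split.
    { exists i1, j1. unfold C0. rewrite (HK0 i1 Hi1 HNi1), (HK0 j1 Hj1 HNj1).
      destruct Rle_dec; [|lra]. auto. }
    assert (Hout : forall i, (i < n)%nat -> C0 i = false -> ~ NI n r (st K) i).
    { intros i Hi Ci HN. unfold C0 in Ci. rewrite (HK0 i Hi HN) in Ci. destruct Rle_dec; [discriminate|lra]. }
    split.
    { intros i Hi Ci. assert (Hne : i1 <> i).
      { intros ->. apply (Hout i Hi Ci HNi1). }
      assert (H := Hout i Hi Ci). rewrite Rplus_0_l. apply Rnot_le_lt. intro Hle. apply H.
      exists i1. repeat split; auto. rewrite (HK0 i1 Hi1 HNi1). destruct (H01 K i Hi).
      apply abs_le_i; lra. }
    intros i j Hi Hj Hne Ci Cj. apply Rnot_le_lt. intro Hle. apply (Hout i Hi Ci).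
    exists j. repeat split; auto. rewrite Rabs_minus_sym; auto. }
  assert (P2 : forall N t C lo hi, (K <= t)%nat -> (t + N <= T)%nat -> Inv n r (st t) C lo hi ->
      (1 - lo) + g * INR (cnt n C) <= INR N * g ->
      exists t', (t <= t' <= t + N)%nat /\ exists C' lo' hi', Inv n r (st t') C' lo' hi' /\
        forall i, (i < n)%nat -> C' i = true).
  { induction N as [|N IH]; intros t C lo hi Ht HtN HI Hpot.
    - exists t. split; [lia|]. exists C, lo, hi. split; auto. intros i Hi.
      destruct (C i) eqn:Ci; auto. exfalso.
      assert (Hc : (1 <= cnt n C)%nat).
      { unfold cnt. destruct (filter (fun j => negb (C j)) (seq 0 n)) eqn:E; [|simpl; lia].
        assert (In i (filter (fun j => negb (C j)) (seq 0 n))) by (apply filter_In; rewrite in_seq, Ci; split; [lia|auto]).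
        rewrite E in H; destruct H. }
      apply le_INR in Hc. simpl in Hc.
      destruct HI as (_ & Hm & _ & _ & [a [_ [Ha [_ [_ [Ca _]]]]]] & _).
      destruct (Hm a Ha Ca). destruct (H01 t a Ha). simpl in Hpot. nra.
    - destruct (classic (exists p, (p < n)%nat /\ C p = false)) as [Hex|Hnex].
      + destruct (p2_step n r Hr0' (st t) (ul t (hist n (fun _ => r) ul b x0 t)) (b t) C lo hi z eta d s
          ltac:(lra) ltac:(lra) ltac:(lra) eq_refl HI Hex (fun j i => Hu_up t Ht j i) (Hb' t ltac:(lia)))
          as [C' [lo' [hi' [HI' Hp']]]].
        rewrite <- HS in HI'.
        destruct (IH (S t) C' lo' hi') as [t' [Ht' Hrest]]; auto; try lia.
        { rewrite S_INR in Hpot. fold g in Hp'. lra. }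
        exists t'. split; [lia|auto].
      + exists t. split; [lia|]. exists C, lo, hi. split; auto. intros i Hi.
        destruct (C i) eqn:Ci; auto. exfalso; apply Hnex; eauto. }
  assert (P3 : forall N t C lo hi D, (K <= t)%nat -> (t + N + 1 <= T)%nat -> Inv n r (st t) C lo hi ->
      (forall i, (i < n)%nat -> C i = true) ->
      (forall i, (i < n)%nat -> Rabs (st t i - z) <= D) -> D <= s + INR N * g ->
      exists t', (t < t' <= t + N + 1)%nat /\ Sset n z alpha (st t')).
  { induction N as [|N IH]; intros t C lo hi D Ht HtN HI HC HD HDs.
    - destruct (p3_step n r Hr0' (st t) (ul t (hist n (fun _ => r) ul b x0 t)) (b t) C lo hi z eta d s D
        ltac:(lra) ltac:(lra) ltac:(lra) eq_refl Hz HI HC HD (fun j i => Hu_up t Ht j i) (Hb' t ltac:(lia)))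
        as [Hok|[Hs' _]].
      + exists (S t). split; [lia|]. split; [apply H01|]. intros i Hi. rewrite HS. specialize (Hok i Hi). lra.
      + simpl in HDs. lra.
    - destruct (p3_step n r Hr0' (st t) (ul t (hist n (fun _ => r) ul b x0 t)) (b t) C lo hi z eta d s D
        ltac:(lra) ltac:(lra) ltac:(lra) eq_refl Hz HI HC HD (fun j i => Hu_up t Ht j i) (Hb' t ltac:(lia)))
        as [Hok|[Hs' [lo' [hi' [HI' HD']]]]].
      + exists (S t). split; [lia|]. split; [apply H01|]. intros i Hi. rewrite HS. specialize (Hok i Hi). lra.
      + rewrite <- HS in HI', HD'.
        destruct (IH (S t) C lo' hi' (D - (s - d)) ltac:(lia) ltac:(lia) HI' HC HD') as [t' [Ht' HS']].
        { rewrite S_INR in HDs. fold g in HDs |- *. lra. }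
        exists t'. split; [lia|auto]. }
  assert (Hcnt : (cnt n C0 <= n)%nat).
  { unfold cnt. eapply Nat.le_trans; [apply filter_length_le|]. rewrite length_seq; lia. }
  destruct (P2 N2 K C0 0 0) as [t' [Ht' [C' [lo' [hi' [HI' HC']]]]]]; auto; try (unfold T; lia).
  { apply le_INR in Hcnt. assert (g * INR (cnt n C0) <= g * INR n) by (apply Rmult_le_compat_l; lra). lra. }
  destruct (P3 N3 t' C' lo' hi' 1) as [t'' [Ht'' HS'']]; auto; try (unfold T; lia).
  { intros i Hi. destruct (H01 t' i Hi). apply abs_le_i; lra. }
  exists t''. split; [unfold T; lia|auto].
Qed.
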